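(* Let $n\ge 2$ and $k\ge1$. Let $M$ be the $(k+1)\times(k+1)$ upper triangular matrix with $M(i,i)=k+1$ for all $i$, $M(i,j)=i$ for $i<j$, and $M(i,j)=0$ for $i>j$; let $I$ be the identity matrix of dimension $k+1$ and $N:=M-(k+1)I$. Then for any $l\in[k]$ and $i\in[k+1]$ with $i+l\le k+1$, $$N^{l}(i,i+l)=\frac{(i+l-1)!}{(i-1)!}.$$
   Context: For a matrix $A$, $A(i,j)$ denotes the entry in row $i$ and column $j$; $[k]=\{1,\dots,k\}$. *)

(* Defs.v *)
From mathcomp Require Import all_boot all_order all_algebra.
Set Implicit Arguments. Unset Strict Implicit. Unset Printing Implicit Defensive.
Import GRing.Theory Num.Theory.
Local Open Scope ring_scope.

(* Indices are 0-based
   ordinals: the paper's row i (1-based) is the ordinal i-1, so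
   M(i,j) = i (1-based) for i<j becomes (i'+1) for ordinals i' < j'. *)
Definition Mmat (k : nat) : 'M[int]_(k.+1) :=
  \matrix_(i < k.+1, j < k.+1)
    (if (i == j) then (k.+1)%:R
     else if (i < j)%N then (i.+1)%:R else 0).

Definition Nmat (k : nat) : 'M[int]_(k.+1) := Mmat k - (k.+1)%:R%:M.

(* Main.v *)
Require Import Defs.
From mathcomp Require Import all_boot all_order all_algebra.
From mathcomp Require Import zify.
Import GRing.Theory Num.Theory.
Local Open Scope ring_scope.

Lemma fact_dvd_add (a l : nat) : (a`! %| (a + l)`!)%N.
Proof.
elim: l => [|l IH]; first by rewrite addn0.
by rewrite addnS factS dvdn_mull.
Qed.

Lemma Nmat_E k (a b : 'I_k.+1) :
  Nmat k a b = if (a < b)%N then (a.+1)%:R else 0.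
Proof.
rewrite /Nmat /Mmat !mxE; case: (eqVneq a b) => [->|ne].
  by rewrite ltnn /= mulr1n subrr.
by rewrite /= mulr0n subr0.
Qed.

Lemma NpowE k l :
  (forall a b : 'I_k.+1, (b < a + l)%N -> (Nmat k ^+ l) a b = 0) /\
  (forall a b : 'I_k.+1, val b = (a + l)%N ->
      (Nmat k ^+ l) a b = ((a + l)`! %/ a`!)%N%:R).
Proof.
elim: l => [|l [IH1 IH2]].
  split=> a b; rewrite expr0 mxE addn0.
    by move=> h; case: eqVneq => [e|//]; rewrite e ltnn in h.
  by move=> /val_inj ->; rewrite eqxx divnn fact_gt0.
split=> a b h; rewrite exprSr mxE.
  apply: big1 => c _; rewrite Nmat_E; case: ltnP => cb; last by rewrite mulr0.
  by rewrite IH1 ?mul0r //; lia.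
have hb : (a + l.+1 < k.+1)%N by rewrite -h ltn_ord. have hc : (a + l < k.+1)%N by lia.
rewrite (bigD1 (Ordinal hc)) //= big1 ?addr0.
  rewrite IH2 // Nmat_E /= -[nat_of_ord b]/(val b) h addnS ltnSn -natrM; congr (_%:R).
  by rewrite factS mulnC muln_divA ?fact_dvd_add.
move=> c hne; rewrite Nmat_E; case: ltnP => cb; last by rewrite mulr0.
have : val c != (a + l)%N by apply/eqP => e; move/eqP: hne; apply; apply: val_inj.
move=> /eqP ne; rewrite IH1 ?mul0r //; move: cb ne h => /=; lia.
Qed.

Theorem lemma3p8 (n k : nat) (hn : (2 <= n)%N) (hk : (1 <= k)%N)
  (l i : nat) (hl1 : (1 <= l)%N) (hlk : (l <= k)%N) (hi1 : (1 <= i)%N)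
  (hik : (i + l <= k.+1)%N) :
  (Nmat k ^+ l) (inord i.-1) (inord (i + l).-1)
    = (((i + l).-1)`! %/ (i.-1)`!)%N%:R.
Proof.
have [_ H] := NpowE k l.
rewrite H !inordK; try lia.
  by have -> : (i.-1 + l = (i + l).-1)%N by lia.
by rewrite /= inordK; lia.
Qed.
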